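(* Let $(\mathcal{P},\Sigma,\mu)$ be a measure space with $\mathcal{P}\subseteq\mathbb{C}^{n_p}$, such that $\overline{\mathsf{p}}\in\mathcal{P}$ for all $\mathsf{p}\in\mathcal{P}$, $\overline{S}\in\Sigma$ for all $S\in\Sigma$, and $\mu(\overline{S})=\mu(S)$ for all $S\in\Sigma$. Let $q_A,q_B,q_C,r,n_f,n_o$ be positive integers and let $\hat\alpha_i,\hat\beta_j,\hat\gamma_k:\mathcal{P}\to\mathbb{C}$ ($i=1,\dots,q_A$, $j=1,\dots,q_B$, $k=1,\dots,q_C$) be measurable functions satisfying $f(\overline{\mathsf{p}})=\overline{f(\mathsf{p})}$ for all $\mathsf{p}\in\mathcal{P}$ (for each such function $f$), and \[ \int_{\mathcal{P}}\left(\frac{\sum_{j=1}^{q_B}|\hat\beta_j(\mathsf{p})|\,\sum_{k=1}^{q_C}|\hat\gamma_k(\mathsf{p})|}{\sum_{i=1}^{q_A}|\hat\alpha_i(\mathsf{p})|}\right)^{2}\,d\mu(\mathsf{p})<\infty . \] Let $R=(\mathbb{R}^{r\times r})^{q_A}\times(\mathbb{R}^{r\times n_f})^{q_B}\times(\mathbb{R}^{n_o\times r})^{q_C}$, and for a tuple $(\hat A_i,\hat B_j,\hat C_k)\in R$ set $\hat{\mathcal{A}}(\mathsf{p})=\sum_{i=1}^{q_A}\hat\alpha_i(\mathsf{p})\hat A_i$, $\hat{\mathcal{B}}(\mathsf{p})=\sum_{j=1}^{q_B}\hat\beta_j(\mathsf{p})\hat B_j$, $\hat{\mathcal{C}}(\mathsf{p})=\sum_{k=1}^{q_C}\hat\gamma_k(\mathsf{p})\hat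 C_k$. Define \[ \mathcal{R}=\Big\{(\hat A_i,\hat B_j,\hat C_k)\in R:\ \operatorname*{ess\,sup}_{\mathsf{p}\in\mathcal{P}}\big\|\hat\alpha_i(\mathsf{p})\hat{\mathcal{A}}(\mathsf{p})^{-1}\big\|_F<\infty,\ i=1,\dots,q_A\Big\}. \] Then $\mathcal{R}$ is an open subset of $R$. Moreover, for every $(\hat A_i,\hat B_j,\hat C_k)\in\mathcal{R}$, the function $\hat y(\mathsf{p})=\hat{\mathcal{C}}(\mathsf{p})\hat{\mathcal{A}}(\mathsf{p})^{-1}\hat{\mathcal{B}}(\mathsf{p})$ is square-integrable, i.e. $\int_{\mathcal{P}}\|\hat y(\mathsf{p})\|_F^2\,d\mu(\mathsf{p})<\infty$.
   Context: $\|\cdot\|_F$ is the Frobenius norm; $R$ is regarded as a finite-dimensional real vector space with its usual topology. The essential supremum is with respect to $\mu$ (the condition in the definition of $\mathcal{R}$ includes that $\hat{\mathcal{A}}(\mathsf{p})$ is invertible for $\mu$-almost every $\mathsf{p}$). *)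

(* Defs.v *)
From HB Require Import structures.
From mathcomp Require Import all_boot all_order all_algebra.
From mathcomp Require Import all_classical all_reals all_analysis.
From mathcomp Require Import ess_sup_inf.
From mathcomp Require Export complex.
Import numFieldNormedType.Exports.

Set Implicit Arguments.
Unset Strict Implicit.
Unset Printing Implicit Defensive.

Import Order.TTheory GRing.Theory Num.Theory.
Local Open Scope ring_scope.
Local Open Scope complex_scope.

Section Defs.
Variable R : realType.

Definition cmod (z : R[i]) : R := Num.sqrt (complex.Re z ^+ 2 + complex.Im z ^+ 2).

Definition frob m n (M : 'M[R[i]]_(m, n)) : R :=
  Num.sqrt (\sum_(i < m) \sum_(j < n) cmod (M i j) ^+ 2).

Definition conj_rV np (v : 'rV[R[i]]_np) : 'rV[R[i]]_np := map_mx (@conjc R) v.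

Definition cplx_mx m n (M : 'M[R]_(m, n)) : 'M[R[i]]_(m, n) :=
  map_mx (fun x : R => x%:C) M.

(* measurability of a complex valued function (Borel sigma-algebra of C = R^2) *)
Definition cmeasurable d (T : measurableType d) (f : T -> R[i]) : Prop :=
  measurable_fun [set: T] (fun p => complex.Re (f p)) /\
  measurable_fun [set: T] (fun p => complex.Im (f p)).

Definition affine_mx (T : Type) q m n (f : 'I_q -> T -> R[i])
  (M : 'I_q -> 'M[R]_(m, n)) (p : T) : 'M[R[i]]_(m, n) :=
  \sum_(i < q) f i p *: cplx_mx (M i).

(* the space R = (R^{r x r})^qA x (R^{r x nf})^qB x (R^{no x r})^qC,
   with the product (= usual, finite-dimensional) topology *)
Definition Rspace (qA qB qC r nf no : nat) :=
  ({ptws 'I_qA -> 'M[R]_r} * {ptws 'I_qB -> 'M[R]_(r, nf)} *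
   {ptws 'I_qC -> 'M[R]_(no, r)})%type.

Definition calA (T : Type) qA qB qC r nf no (alpha : 'I_qA -> T -> R[i])
  (x : Rspace qA qB qC r nf no) := affine_mx alpha x.1.1.
Definition calB (T : Type) qA qB qC r nf no (beta : 'I_qB -> T -> R[i])
  (x : Rspace qA qB qC r nf no) := affine_mx beta x.1.2.
Definition calC (T : Type) qA qB qC r nf no (gamma : 'I_qC -> T -> R[i])
  (x : Rspace qA qB qC r nf no) := affine_mx gamma x.2.

Definition calR d (T : measurableType d) (mu : {measure set T -> \bar R})
  qA qB qC r nf no (alpha : 'I_qA -> T -> R[i]) : set (Rspace qA qB qC r nf no) :=
  [set x | {ae mu, forall p, calA alpha x p \in unitmx} /\
           forall i : 'I_qA,
             (ess_sup mu (fun p => (frob (alpha i p *: invmx (calA alpha x p)))%:E)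
              < +oo)%E].

Definition yhat (T : Type) qA qB qC r nf no (alpha : 'I_qA -> T -> R[i])
  (beta : 'I_qB -> T -> R[i]) (gamma : 'I_qC -> T -> R[i])
  (x : Rspace qA qB qC r nf no) (p : T) : 'M[R[i]]_(no, nf) :=
  calC gamma x p *m invmx (calA alpha x p) *m calB beta x p.

End Defs.

(* Main.v *)
Require Import Defs.
From HB Require Import structures.
From mathcomp Require Import all_boot all_order all_algebra.
From mathcomp Require Import all_classical all_reals all_analysis.
From mathcomp Require Import complex.
Import numFieldNormedType.Exports.
Import Order.TTheory GRing.Theory Num.Theory.
Local Open Scope ring_scope.
Local Open Scope classical_set_scope.
From mathcomp Require Import ess_sup_inf measurable_realfun.
From mathcomp Require Import ring lra.
Set Implicit Arguments.
Unset Strict Implicit.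
Unset Printing Implicit Defensive.
Local Open Scope complex_scope.

Section Alg.
Variable R : realType.
Local Notation C := R[i].

Lemma cmodE (z : C) : (cmod z)%:C = `|z|.
Proof. by rewrite normc_def. Qed.

Lemma cmod_ge0 (z : C) : 0 <= cmod z.
Proof. exact: sqrtr_ge0. Qed.

Lemma cmodM (a b : C) : cmod (a * b) = cmod a * cmod b.
Proof. by apply: complexI; rewrite rmorphM /= !cmodE normrM. Qed.

Lemma cmodD (a b : C) : cmod (a + b) <= cmod a + cmod b.
Proof. by rewrite -lecR rmorphD /= !cmodE ler_normD. Qed.

Lemma cmod0 : cmod (0 : C) = 0.
Proof. by apply: complexI; rewrite cmodE normr0. Qed.

Lemma cmod1 : cmod (1 : C) = 1.
Proof. by apply: complexI; rewrite cmodE normr1. Qed.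

Lemma cmodN (z : C) : cmod (- z) = cmod z.
Proof. by apply: complexI; rewrite !cmodE normrN. Qed.

Lemma cmod_eq0 (z : C) : cmod z = 0 -> z = 0.
Proof.
by move/(congr1 (real_complex R)); rewrite cmodE /= => /eqP; rewrite normr_eq0 => /eqP.
Qed.

Lemma cmodR (x : R) : cmod x%:C = `|x|.
Proof. by rewrite /cmod /= expr0n /= addr0 sqrtr_sqr. Qed.

Lemma cmod_sum (I : finType) (F : I -> C) : cmod (\sum_i F i) <= \sum_i cmod (F i).
Proof.
rewrite -lecR cmodE rmorph_sum /=.
rewrite [X in _ <= X](eq_bigr (fun i => `|F i|)); first exact: ler_norm_sum.
by move=> i _; rewrite cmodE.
Qed.

Lemma le_sum_term (I : finType) (F : I -> R) k : (forall i, 0 <= F i) -> F k <= \sum_i F i.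
Proof. by move=> F0; rewrite (bigD1 k) //= lerDl sumr_ge0. Qed.
Arguments le_sum_term {I} F k _.

Lemma sq_sum_le (I : finType) (F : I -> R) : (forall i, 0 <= F i) ->
  \sum_i F i ^+ 2 <= (\sum_i F i) ^+ 2.
Proof.
move=> F0; rewrite [X in _ <= X]expr2 mulr_suml; apply: ler_sum => i _.
by rewrite expr2 ler_wpM2l // le_sum_term.
Qed.

Definition N1 m n (M : 'M[C]_(m, n)) : R := \sum_i \sum_j cmod (M i j).
Arguments N1 {m n} M.

Lemma N1_ge0 m n (M : 'M[C]_(m, n)) : 0 <= N1 M.
Proof. by apply: sumr_ge0 => i _; apply: sumr_ge0 => j _; exact: cmod_ge0. Qed.

Lemma N1D m n (M N : 'M[C]_(m, n)) : N1 (M + N) <= N1 M + N1 N.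
Proof.
rewrite /N1 -big_split; apply: ler_sum => i _; rewrite -big_split; apply: ler_sum => j _.
by rewrite mxE cmodD.
Qed.

Lemma N1Z m n c (M : 'M[C]_(m, n)) : N1 (c *: M) = cmod c * N1 M.
Proof.
rewrite /N1 mulr_sumr; apply: eq_bigr => i _; rewrite mulr_sumr; apply: eq_bigr => j _.
by rewrite mxE cmodM.
Qed.

Lemma N1N m n (M : 'M[C]_(m, n)) : N1 (- M) = N1 M.
Proof. by rewrite /N1; apply: eq_bigr => i _; apply: eq_bigr => j _; rewrite mxE cmodN. Qed.

Lemma N10 m n : N1 (0 : 'M[C]_(m, n)) = 0.
Proof. by rewrite /N1 big1 // => i _; rewrite big1 // => j _; rewrite mxE cmod0. Qed.

Lemma N1_sum m n (I : finType) (F : I -> 'M[C]_(m, n)) : N1 (\sum_i F i) <= \sum_i N1 (F i).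
Proof.
elim/big_rec2: _ => [|i y1 y2 _ IH]; first by rewrite N10.
by rewrite (le_trans (N1D _ _)) // lerD2l.
Qed.

Lemma N1_eq0 m n (M : 'M[C]_(m, n)) : N1 M = 0 -> M = 0.
Proof.
move=> /eqP; rewrite psumr_eq0; last by move=> i _; apply: sumr_ge0 => j _; exact: cmod_ge0.
move=> /allP H; apply/matrixP => i j; rewrite mxE; apply: cmod_eq0.
have := H i (mem_index_enum _); rewrite implyTb psumr_eq0; last by move=> k _; exact: cmod_ge0.
by move=> /allP /(_ j (mem_index_enum _)) /implyP /(_ isT) /eqP.
Qed.

Lemma cmod_le_N1 m n (M : 'M[C]_(m, n)) i j : cmod (M i j) <= N1 M.
Proof.
rewrite /N1; apply: (le_trans (y := \sum_j cmod (M i j))).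
  by apply: (le_sum_term (fun j => cmod (M i j))) => k; exact: cmod_ge0.
by apply: (le_sum_term (fun i => \sum_j cmod (M i j))) => k; apply: sumr_ge0 => l _; exact: cmod_ge0.
Qed.

Lemma N1M m n p (M : 'M[C]_(m, n)) (N : 'M[C]_(n, p)) : N1 (M *m N) <= N1 M * N1 N.
Proof.
rewrite /N1 mulr_suml; apply: ler_sum => i _.
apply: (@le_trans _ _ (\sum_j \sum_k cmod (M i k) * cmod (N k j))).
  by apply: ler_sum => j _; rewrite mxE; apply: le_trans (cmod_sum _) _;
     apply: ler_sum => k _; rewrite cmodM.
rewrite exchange_big /= mulr_suml; apply: ler_sum => k _; rewrite -mulr_sumr.
apply: ler_wpM2l; first exact: cmod_ge0.
by apply: (le_sum_term (fun k => \sum_j cmod (N k j))) => l; apply: sumr_ge0 => j _; exact: cmod_ge0.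
Qed.

Lemma N1_1 n : N1 (1%:M : 'M[C]_n) = n%:R.
Proof.
rewrite /N1 (eq_bigr (fun _ => 1)); first by rewrite sumr_const card_ord.
move=> i _; rewrite (bigD1 i) //= mxE eqxx cmod1 big1 ?addr0 // => j /negbTE ji.
by rewrite mxE eq_sym ji cmod0.
Qed.

Lemma frob_le_N1 m n (M : 'M[C]_(m, n)) : frob M <= N1 M.
Proof.
rewrite /frob -[N1 M]ger0_norm ?N1_ge0 // -sqrtr_sqr ler_wsqrtr //.
apply: (le_trans (y := \sum_i (\sum_j cmod (M i j)) ^+ 2)).
  by apply: ler_sum => i _; apply: sq_sum_le => j; exact: cmod_ge0.
by rewrite /N1; apply: sq_sum_le => i; apply: sumr_ge0 => j _; exact: cmod_ge0.
Qed.

Lemma cmod_le_frob m n (M : 'M[C]_(m, n)) i j : cmod (M i j) <= frob M.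
Proof.
rewrite /frob -[cmod _]ger0_norm ?cmod_ge0 // -sqrtr_sqr ler_wsqrtr //.
apply: (le_trans (y := \sum_j cmod (M i j) ^+ 2)).
  by apply: (le_sum_term (fun j => cmod (M i j) ^+ 2)) => k; exact: sqr_ge0.
by apply: (le_sum_term (fun i => \sum_j cmod (M i j) ^+ 2)) => k; apply: sumr_ge0 => l _; exact: sqr_ge0.
Qed.

Lemma N1_le_frob m n (M : 'M[C]_(m, n)) : N1 M <= (m * n)%:R * frob M.
Proof.
apply: (@le_trans _ _ (\sum_(i < m) \sum_(j < n) frob M)).
  by apply: ler_sum => i _; apply: ler_sum => j _; exact: cmod_le_frob.
rewrite (eq_bigr (fun _ => (n%:R * frob M))); last by move=> i _; rewrite sumr_const card_ord mulr_natl.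
by rewrite sumr_const card_ord natrM -mulrA [X in _ <= X]mulr_natl.
Qed.

Lemma N1_cplx m n (A : 'M[R]_(m, n)) : N1 (cplx_mx A) = \sum_i \sum_j `|A i j|.
Proof. by apply: eq_bigr => i _; apply: eq_bigr => j _; rewrite mxE cmodR. Qed.


Lemma invmxM' n (P Q : 'M[C]_n) : P \in unitmx -> Q \in unitmx ->
  invmx (P *m Q) = invmx Q *m invmx P.
Proof.
move=> uP uQ; have uPQ : P *m Q \in unitmx by rewrite unitmx_mul uP uQ.
have E : P *m Q *m (invmx Q *m invmx P) = 1%:M.
  by rewrite mulmxA -(mulmxA P) mulmxV // mulmx1 mulmxV.
by rewrite -[LHS]mulmx1 -E mulmxA mulVmx // mul1mx.
Qed.

Lemma pert n q (A : 'M[C]_n) (a : 'I_q -> C) (D : 'I_q -> 'M[C]_n) (L : 'I_q -> R) :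
  A \in unitmx -> (forall i, N1 (a i *: invmx A) <= L i) ->
  \sum_i N1 (D i) * L i <= 2^-1 ->
  (A + \sum_i a i *: D i) \in unitmx /\
  forall i, N1 (a i *: invmx (A + \sum_i a i *: D i)) <= L i * (2 * n%:R).
Proof.
move=> uA HL small.
set E := (\sum_i a i *: D i) *m invmx A.
have NE : N1 E <= 2^-1.
  rewrite /E mulmx_suml; apply: le_trans (N1_sum _) _; apply: le_trans small.
  apply: ler_sum => i _; rewrite -scalemxAl scalemxAr.
  by apply: le_trans (N1M _ _) _; apply: ler_wpM2l; [exact: N1_ge0 | exact: HL].
have eA' : A + \sum_i a i *: D i = (1%:M + E) *m A.
  by rewrite mulmxDl mul1mx -mulmxA mulVmx // mulmx1.
have uE : 1%:M + E \in unitmx.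
  rewrite unitmxE unitfE; apply/negP => nu.
  have [v v0 hv] := det0P nu.
  have ev : v = - (v *m E).
    by apply/eqP; rewrite -addr_eq0 -[X in X + _]mulmx1 -mulmxDr hv.
  have h1 : N1 v <= N1 v * N1 E by rewrite {1}ev N1N; exact: N1M.
  have h2 : N1 v * N1 E <= N1 v * 2^-1 by exact: (ler_wpM2l (N1_ge0 v) NE).
  have h3 := N1_ge0 v.
  have : N1 v = 0 by lra.
  by move/N1_eq0 => v0'; move: v0; rewrite v0' eqxx.
split; first by rewrite eA' unitmx_mul uE uA.
set W := invmx (1%:M + E).
have hW : W = 1%:M - E *m W.
  have : (1%:M + E) *m W = 1%:M by rewrite mulmxV.
  by rewrite mulmxDl mul1mx => h; rewrite -h addrK.
have NW : N1 W <= 2 * n%:R.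
  have h1 : N1 W <= n%:R + N1 E * N1 W.
    rewrite {1}hW; apply: le_trans (N1D _ _) _; rewrite N1_1 N1N lerD2l; exact: N1M.
  have h2 : N1 E * N1 W <= 2^-1 * N1 W by exact: (ler_wpM2r (N1_ge0 W) NE).
  have h3 := N1_ge0 W.
  lra.
move=> i; rewrite eA' invmxM' // -/W scalemxAl.
apply: le_trans (N1M _ _) _; apply: ler_pM => //; [exact: N1_ge0 | exact: N1_ge0].
Qed.

End Alg.

Section Integ.
Variables (R : realType) (d : measure_display) (T : measurableType d).
Variable mu : {measure set T -> \bar R}.
Local Open Scope ereal_scope.
Import HBNNSimple.

Lemma inner_ae_le (f g : T -> \bar R) (K : R) : (0 < K)%R ->
  (forall x, 0 <= f x) -> (forall x, 0 <= g x) ->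
  {ae mu, forall x, f x <= K%:E * g x} ->
  \int[mu]_x f x <= K%:E * \int[mu]_x g x.
Proof.
move=> K0 f0 g0 [N [mN muN sub]].
rewrite !ge0_integralTE //.
apply: ge_ereal_sup => _ [h /= hf <-].
have K0' : (0 <= K^-1)%R by rewrite invr_ge0 ltW.
pose h' := scale_nnsfun (proj_nnsfun h (measurableC mN)) K0'.
have h'g : forall x, (h' x)%:E <= g x.
  move=> x; rewrite /h' /= mindicE.
  case: (pselect (N x)) => Nx.
    by rewrite memNset ?mulr0 ?mul0r //=; apply/negP; rewrite inE.
  rewrite mem_set //= mulr1 EFinM.
  have hx : (h x)%:E <= K%:E * g x.
    apply: le_trans (hf x) _; apply: contrapT => nle; apply: Nx; apply: sub => /= H.
    by apply: nle; exact: H.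
  apply: le_trans (lee_wpmul2l _ hx) _; first by rewrite lee_fin.
  by rewrite muleA -EFinM mulVf ?gt_eqF // mul1e.
have : sintegral mu h' <= ereal_sup [set sintegral mu h | h in [set h : {nnsfun T >-> R} | forall x, (h x)%:E <= g x]].
  by apply: ereal_sup_ubound; exists h'.
have -> : sintegral mu h' = K^-1%:E * sintegral mu h.
  rewrite /h' /scale_nnsfun sintegralrM; congr (_ * _).
  rewrite -mrestrict -integral_nnsfun; last exact: measurableC.
  rewrite -setTD -ge0_negligible_integral //.
  - by rewrite integralT_nnsfun.
  - by apply/measurable_EFinP; exact: measurable_funP.
  - by move=> x _; rewrite lee_fin.
have K0e : 0 <= K%:E by rewrite lee_fin ltW.
move=> H; apply: le_trans (lee_wpmul2l K0e H).
by rewrite muleA -EFinM divff ?gt_eqF // mul1e.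
Qed.


Lemma ess_sup_bound (f : T -> R) : ess_sup mu (fun p => (f p)%:E) < +oo ->
  exists M : R, (0 <= M)%R /\ {ae mu, forall p, (f p <= M)%R}.
Proof.
move=> H; have Hae := ess_sup_ge mu (fun p => (f p)%:E).
move: H Hae; case: (ess_sup mu _) => [s| |] // _ Hae.
  exists (Num.max s 0%R); split; first by rewrite le_max lexx orbT.
  by apply: filterS Hae => p /=; rewrite lee_fin => h; rewrite le_max h.
by exists 0%R; split => //; apply: filterS Hae => p /=; rewrite leeNy_eq.
Qed.

End Integ.

Section YB.
Variable R : realType.
Local Notation C := R[i].

Lemma ybound r nf no qA qB qC (a : 'I_qA -> C) (b : 'I_qB -> C) (g : 'I_qC -> C)
  (As : 'I_qA -> 'M[R]_r) (Bs : 'I_qB -> 'M[R]_(r, nf)) (Cs : 'I_qC -> 'M[R]_(no, r))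
  (L : 'I_qA -> R) : (0 < r)%N ->
  (\sum_i a i *: cplx_mx (As i)) \in unitmx ->
  (forall i, N1 (a i *: invmx (\sum_i a i *: cplx_mx (As i))) <= L i) ->
  0 < \sum_i cmod (a i) /\
  frob ((\sum_k g k *: cplx_mx (Cs k)) *m invmx (\sum_i a i *: cplx_mx (As i))
        *m (\sum_j b j *: cplx_mx (Bs j))) <=
  (\sum_k N1 (cplx_mx (Cs k))) * (\sum_i L i) * (\sum_j N1 (cplx_mx (Bs j))) *
  ((\sum_j cmod (b j)) * (\sum_k cmod (g k)) / \sum_i cmod (a i)).
Proof.
move=> r0 uA HL.
set A := \sum_i a i *: cplx_mx (As i). 
move: uA HL; rewrite -/A => uA HL.
set sa := \sum_i cmod (a i).
have sa0 : 0 < sa.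
  rewrite lt_def sumr_ge0 ?andbT; last by move=> i _; exact: cmod_ge0.
  apply/negP => /eqP sa0; move: uA.
  have -> : A = 0.
    rewrite /A big1 // => i _.
    have /eqP := sa0; rewrite psumr_eq0; last by move=> k _; exact: cmod_ge0.
    move=> /allP /(_ i (mem_index_enum _)) /implyP /(_ isT) /eqP /cmod_eq0 ->.
    by rewrite scale0r.
  by clear -r0; case: r r0 => // r' _; rewrite unitmxE det0 unitfE eqxx.
split => //.
set KC := \sum_k N1 (cplx_mx (Cs k)).
set KB := \sum_j N1 (cplx_mx (Bs j)).
set sb := \sum_j cmod (b j).
set sg := \sum_k cmod (g k).
set SL := \sum_i L i.
have KC0 : 0 <= KC by apply: sumr_ge0 => k _; exact: N1_ge0.
have KB0 : 0 <= KB by apply: sumr_ge0 => k _; exact: N1_ge0.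
have sb0 : 0 <= sb by apply: sumr_ge0 => k _; exact: cmod_ge0.
have sg0 : 0 <= sg by apply: sumr_ge0 => k _; exact: cmod_ge0.
have NC : N1 (\sum_k g k *: cplx_mx (Cs k)) <= sg * KC.
  apply: le_trans (N1_sum _) _; rewrite /sg mulr_suml; apply: ler_sum => k _.
  rewrite N1Z; apply: ler_wpM2l; first exact: cmod_ge0.
  rewrite /KC; apply: (@le_sum_term R _ (fun k => N1 (cplx_mx (Cs k)))) => l; exact: N1_ge0.
have NB : N1 (\sum_j b j *: cplx_mx (Bs j)) <= sb * KB.
  apply: le_trans (N1_sum _) _; rewrite /sb mulr_suml; apply: ler_sum => k _.
  rewrite N1Z; apply: ler_wpM2l; first exact: cmod_ge0.
  by rewrite /KB; apply: (@le_sum_term R _ (fun k => N1 (cplx_mx (Bs k)))) => l; exact: N1_ge0.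
have NA : N1 (invmx A) <= SL / sa.
  rewrite ler_pdivlMr // mulrC /sa mulr_suml; apply: ler_sum => i _.
  by rewrite -N1Z; exact: HL.
apply: le_trans (frob_le_N1 _) _.
apply: le_trans (N1M _ _) _.
apply: le_trans (ler_wpM2r (N1_ge0 _) (N1M _ _)) _.
apply: (@le_trans _ _ ((sg * KC) * (SL / sa) * (sb * KB))).
  apply: ler_pM; [| exact: N1_ge0 | | exact: NB].
    by apply: mulr_ge0; exact: N1_ge0.
  by apply: ler_pM => //; exact: N1_ge0.
rewrite le_eqVlt; apply/orP; left; apply/eqP.
by rewrite /=; field; rewrite gt_eqF.
Qed.

End YB.

Lemma near_forall3 (X : topologicalType) (x : X) (I J K : finType)
  (P : I -> J -> K -> X -> Prop) :
  (forall i j k, nbhs x (P i j k)) -> nbhs x (fun y => forall i j k, P i j k y).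
Proof.
move=> H.
apply: (@filter_forall X I (fun i y => forall j k, P i j k y) (nbhs x) _) => i.
apply: (@filter_forall X J (fun j y => forall k, P i j k y) (nbhs x) _) => j.
exact: (@filter_forall X K (fun k y => P i j k y) (nbhs x) _ (H i j)).
Qed.

Theorem lemma1 (R : realType) (d : measure_display) (T : measurableType d)
  (mu : {measure set T -> \bar R}) (np : nat)
  (emb : T -> 'rV[R[i]]_np) (cj : T -> T)
  (emb_inj : injective emb)
  (emb_cj : forall p, emb (cj p) = conj_rV (emb p))
  (cj_meas : forall S : set T, measurable S -> measurable (cj @` S))
  (mu_cj : forall S : set T, measurable S -> mu (cj @` S) = mu S)
  (qA qB qC r nf no : nat)
  (qA_pos : (0 < qA)%N) (qB_pos : (0 < qB)%N) (qC_pos : (0 < qC)%N)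
  (r_pos : (0 < r)%N) (nf_pos : (0 < nf)%N) (no_pos : (0 < no)%N)
  (alpha : 'I_qA -> T -> R[i]) (beta : 'I_qB -> T -> R[i])
  (gamma : 'I_qC -> T -> R[i])
  (alpha_meas : forall i, cmeasurable (alpha i))
  (beta_meas : forall j, cmeasurable (beta j))
  (gamma_meas : forall k, cmeasurable (gamma k))
  (alpha_cj : forall i p, alpha i (cj p) = conjc (alpha i p))
  (beta_cj : forall j p, beta j (cj p) = conjc (beta j p))
  (gamma_cj : forall k p, gamma k (cj p) = conjc (gamma k p))
  (H2 : (\int[mu]_(p in [set: T])
          ((((\sum_(j < qB) cmod (beta j p)) * (\sum_(k < qC) cmod (gamma k p)))%:E
            / (\sum_(i < qA) cmod (alpha i p))%:E) ^+ 2) < +oo)%E) :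
  open (calR mu (qB := qB) (qC := qC) (r := r) (nf := nf) (no := no) alpha) /\
  forall x : Rspace R qA qB qC r nf no,
    calR mu alpha x ->
    (\int[mu]_(p in [set: T]) ((frob (yhat alpha beta gamma x p)) ^+ 2)%:E < +oo)%E.
Proof.
have bounds : forall x : Rspace R qA qB qC r nf no, calR mu alpha x ->
  exists L : 'I_qA -> R, (forall i, 0 <= L i) /\
  {ae mu, forall p, calA alpha x p \in unitmx /\
     forall i, N1 (alpha i p *: invmx (calA alpha x p)) <= L i}.
  move=> x [Hu Hb].
  have /choice [M HM] : forall i, exists M : R, (0 <= M) /\
      {ae mu, forall p, frob (alpha i p *: invmx (calA alpha x p)) <= M}.
    by move=> i; apply: ess_sup_bound; exact: Hb i.
  exists (fun i => (r * r)%:R * M i); split.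
    by move=> i; apply: mulr_ge0 => //; exact: (HM i).1.
  have Hall : {ae mu, forall p, forall i,
      frob (alpha i p *: invmx (calA alpha x p)) <= M i}.
    by apply: filter_forall => i; exact: (HM i).2.
  apply: filterS (filterI Hu Hall) => p [up hp]; split => // i.
  apply: le_trans (N1_le_frob _) _; apply: ler_wpM2l => //.
split.
  rewrite openE => x /bounds [L [L0 Hae]].
  rewrite /interior.
  set SL := \sum_i L i.
  have SL0 : 0 <= SL by apply: sumr_ge0 => i _; exact: L0.
  have rr0 : 0 < (r * r)%:R :> R by rewrite ltr0n muln_gt0 r_pos.
  set eps := 2^-1 / ((r * r)%:R * (SL + 1)).
  have eps0 : 0 < eps.
    by rewrite /eps divr_gt0 // mulr_gt0 //; lra.
  have near1 : nbhs x (fun y : Rspace R qA qB qC r nf no => forall i j k,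
      `|(x.1.1 i : 'M[R]_r) j k - (y.1.1 i : 'M[R]_r) j k| < eps).
    apply: (near_forall3 (P := fun i j k (y : Rspace R qA qB qC r nf no) =>
      `|(x.1.1 i : 'M[R]_r) j k - (y.1.1 i : 'M[R]_r) j k| < eps)) => i j k.
    have hc : (fun y : Rspace R qA qB qC r nf no => (y.1.1 i) j k) @ x --> (x.1.1 i) j k.
      apply: (@cvg_comp _ _ _ (fun y : Rspace R qA qB qC r nf no => y.1)
        (fun z => (z.1 i : 'M[R]_r) j k) _ (nbhs x.1)).
        exact: cvg_fst.
      apply: (@cvg_comp _ _ _ (fun z : {ptws 'I_qA -> 'M[R]_r} * {ptws 'I_qB -> 'M[R]_(r, nf)} => z.1)
        (fun f => (f i : 'M[R]_r) j k) _ (nbhs x.1.1)).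
        exact: cvg_fst.
      apply: (@cvg_comp _ _ _ (fun f : {ptws 'I_qA -> 'M[R]_r} => f i)
        (fun M : 'M[R]_r => M j k) _ (nbhs (x.1.1 i))).
        exact: proj_continuous.
      exact: coord_continuous.
    exact: (cvgrPdist_lt _ _).1 hc eps eps0.
  apply: filterS near1 => y Hy.
  have Hae' : {ae mu, forall p, calA alpha y p \in unitmx /\
      forall i, N1 (alpha i p *: invmx (calA alpha y p)) <= L i * (2 * r%:R)}.
    apply: filterS Hae => p [up hp].
    have eA : calA alpha y p = calA alpha x p +
        \sum_i alpha i p *: cplx_mx (y.1.1 i - x.1.1 i).
      rewrite /calA /affine_mx -big_split /=; apply: eq_bigr => i _.
      rewrite -scalerDr; congr (_ *: _); apply/matrixP => j k.
      by rewrite !mxE -rmorphD /= addrCA subrr addr0.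
    rewrite eA; apply: pert => //.
    have hN : forall i, N1 (cplx_mx (y.1.1 i - x.1.1 i)) <= (r * r)%:R * eps.
      move=> i; rewrite N1_cplx.
      apply: (le_trans (y := \sum_(j < r) \sum_(k < r) eps)).
        apply: ler_sum => j _; apply: ler_sum => k _.
        by rewrite !mxE distrC; exact: ltW (Hy i j k).
      by rewrite !sumr_const !card_ord -mulrnA mulr_natl.
    apply: (le_trans (y := \sum_i (r * r)%:R * eps * L i)).
      by apply: ler_sum => i _; exact: (ler_wpM2r (L0 i) (hN i)).
    rewrite -mulr_sumr -/SL.
    have -> : (r * r)%:R * eps = 2^-1 / (SL + 1).
      by rewrite /eps; field; apply/andP; split; [rewrite gt_eqF //; lra | rewrite pnatr_eq0 -lt0n].

    have h1 : SL / (SL + 1) <= 1 by rewrite ler_pdivrMr; lra.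
    rewrite mulrAC -mulrA.
    have := ler_wpM2l (_ : 0 <= 2^-1) h1.
    by rewrite mulr1; apply; lra.
  split.
    by apply: filterS Hae' => p [].
  move=> i; apply: (le_lt_trans (y := (L i * (2 * r%:R))%:E)); last exact: ltry.
  apply/ess_supP; apply: filterS Hae' => p [_ hp]; rewrite lee_fin.
  exact: le_trans (frob_le_N1 _) (hp i).
move=> x /bounds [L [L0 Hae]].
set KC := \sum_k N1 (cplx_mx (x.2 k)).
set KB := \sum_j N1 (cplx_mx (x.1.2 j)).
set K0 := KC * (\sum_i L i) * KB.
have K00 : 0 <= K0.
  apply: mulr_ge0; [apply: mulr_ge0|].
  - by apply: sumr_ge0 => k _; exact: N1_ge0.
  - by apply: sumr_ge0 => k _; exact: L0.
  - by apply: sumr_ge0 => k _; exact: N1_ge0.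
pose K := K0 ^+ 2 + 1.
have K0' : 0 < K by have := sqr_ge0 K0; rewrite /K; lra.
apply: (le_lt_trans (inner_ae_le (K := K) (g := fun p =>
  ((((\sum_(j < qB) cmod (beta j p)) * (\sum_(k < qC) cmod (gamma k p)))%:E
            / (\sum_(i < qA) cmod (alpha i p))%:E) ^+ 2)%E) _ _ _ _)).
- exact: K0'.
- by move=> p; rewrite lee_fin sqr_ge0.
- by move=> p; exact: sqre_ge0.
- apply: filterS Hae => p [up hp].
  have [sa0 hy] := ybound (fun j => beta j p) (fun k => gamma k p) x.1.2 x.2 r_pos up hp.
  have hy' : frob (yhat alpha beta gamma x p) <= K0 *
     ((\sum_(j < qB) cmod (beta j p)) * (\sum_(k < qC) cmod (gamma k p)) / \sum_(i < qA) cmod (alpha i p)) := hy.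
  rewrite inver gt_eqF // -EFinM lee_fin.
  move: hy'; set t := (_ * _ / _); set f := frob _ => hy'.
  have f0 : 0 <= f by exact: sqrtr_ge0.
  have t0 : 0 <= t.
    rewrite /t; apply: divr_ge0; last exact: ltW sa0.
    by apply: mulr_ge0; apply: sumr_ge0 => k _; exact: cmod_ge0.

  have h1 := ler_pM f0 f0 hy' hy'.
  rewrite /K; nra.
- apply: lte_mul_pinfty => //; first by rewrite lee_fin ltW.
Qed.
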